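(* Assume the setting described in the context. Let $\hat{\mathcal{D}}=\{\Delta\in\mathcal{D}:\Delta_j\in\{\Delta_j^-,\Delta_j^+\}\ \text{for all } j\}$ be the set of the $2^m$ vertices of $\mathcal{D}$, enumerated as $\Delta^{(1)},\dots,\Delta^{(2^m)}$, and let $p_i(\kappa)=\det[-(B\Delta^{(i)}C+\kappa^2J_2+\kappa^4J_4)]$. Then for all $\kappa\ge0$, $\Psi^-(\kappa)=\min_i p_i(\kappa)$ and $\Psi^+(\kappa)=\max_i p_i(\kappa)$. Moreover, $\Psi^-$ and $\Psi^+$ are piecewise polynomial: there exist finitely many values $\kappa_1<\kappa_2<\dots<\kappa_M$ such that $\Psi^-$ (and analogously $\Psi^+$) coincides with a polynomial on each interval $[\kappa_h,\kappa_{h+1}]$ (and on the unbounded end intervals); in particular they are piecewise differentiable.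
   Context: Let $n,m\ge 1$, $B\in\mathbb{Z}^{n\times m}$, $C\in\mathbb{Z}^{m\times n}$, and $J_2,J_4\in\mathbb{R}^{n\times n}$ symmetric. Given bounds $0\le \Delta_j^-\le \Delta_j^+<\infty$ ($j=1,\dots,m$), $\mathcal{D}$ is the set of diagonal matrices $\Delta=\mathrm{diag}(\Delta_1,\dots,\Delta_m)$ with $\Delta_j^-\le\Delta_j\le\Delta_j^+$. For real $\kappa\ge0$, $\Psi^-(\kappa)=\min_{\Delta\in\mathcal{D}}\det[-(B\Delta C+\kappa^2J_2+\kappa^4J_4)]$ and $\Psi^+(\kappa)=\max_{\Delta\in\mathcal{D}}\det[-(B\Delta C+\kappa^2J_2+\kappa^4J_4)]$. *)

(* Defs.v *)
From HB Require Import structures.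
From mathcomp Require Import all_boot all_order all_algebra.
From mathcomp Require Import all_classical all_reals.
Set Implicit Arguments. Unset Strict Implicit. Unset Printing Implicit Defensive.
Import Order.TTheory GRing.Theory Num.Theory.
Local Open Scope classical_set_scope.
Local Open Scope ring_scope.

Definition Mk (R : realType) (n m : nat) (B : 'M[int]_(n, m)) (C : 'M[int]_(m, n))
  (J2 J4 : 'M[R]_n) (d : 'rV[R]_m) (k : R) : 'M[R]_n :=
  - (map_mx (fun z : int => z%:~R) B *m diag_mx d *m map_mx (fun z : int => z%:~R) C
     + k ^+ 2 *: J2 + k ^+ 4 *: J4).

Definition inD (R : realType) (m : nat) (dm dp : 'I_m -> R) (d : 'rV[R]_m) : Prop :=
  forall j, dm j <= d 0 j <= dp j.

Definition vertex (R : realType) (m : nat) (dm dp : 'I_m -> R) (b : {ffun 'I_m -> bool})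
  : 'rV[R]_m := \row_j (if b j then dp j else dm j).

(* Psi^-(k) = min over D (written as inf of the set of attained values) *)
Definition Psi_minus (R : realType) (n m : nat) (B : 'M[int]_(n, m)) (C : 'M[int]_(m, n))
  (J2 J4 : 'M[R]_n) (dm dp : 'I_m -> R) (k : R) : R :=
  inf [set \det (Mk B C J2 J4 d k) | d in [set d | inD dm dp d]].

Definition Psi_plus (R : realType) (n m : nat) (B : 'M[int]_(n, m)) (C : 'M[int]_(m, n))
  (J2 J4 : 'M[R]_n) (dm dp : 'I_m -> R) (k : R) : R :=
  sup [set \det (Mk B C J2 J4 d k) | d in [set d | inD dm dp d]].

Definition pvert (R : realType) (n m : nat) (B : 'M[int]_(n, m)) (C : 'M[int]_(m, n))
  (J2 J4 : 'M[R]_n) (dm dp : 'I_m -> R) (b : {ffun 'I_m -> bool}) (k : R) : R :=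
  \det (Mk B C J2 J4 (vertex dm dp b) k).

(* f is piecewise polynomial on [0, +oo): finitely many breakpoints
   s_0 < s_1 < ... < s_{M-1}, and polynomials ps_0, ..., ps_M such that f agrees
   with ps_h on the h-th piece (0 <= h <= M): piece 0 is [0, s_0] (restricted to
   k >= 0), piece h is [s_{h-1}, s_h], piece M is [s_{M-1}, +oo). *)
Definition piecewise_poly_nonneg (R : realType) (f : R -> R) : Prop :=
  exists (s : seq R) (ps : seq {poly R}),
    [/\ sorted <%R s, size ps = (size s).+1 &
        forall (k : R) (h : nat), 0 <= k -> (h <= size s)%N ->
          ((0 < h)%N -> s`_(h.-1) <= k) -> ((h < size s)%N -> k <= s`_h) ->
          f k = (ps`_h).[k]].

(* Main.v *)
Require Import Defs.
From HB Require Import structures.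
From mathcomp Require Import all_boot all_order all_algebra.
From mathcomp Require Import all_classical all_reals.
From mathcomp Require Import topology normedtype derive.
From mathcomp Require Import lra zify.
Import Order.TTheory GRing.Theory Num.Theory.
Import numFieldNormedType.Exports.
Set Implicit Arguments. Unset Strict Implicit. Unset Printing Implicit Defensive.
Local Open Scope ring_scope.

Lemma det_rank1 (R : comNzRingType) n (A : 'M[R]_n) (u : 'cV[R]_n) (v : 'rV[R]_n) :
  exists a b : R, forall t, \det (A + t *: (u *m v)) = a + t * b.
Proof.
pose X t : 'M[R]_(1 + n) := block_mx (1%:M : 'M_1) (- (t *: v)) u A.
pose X0 : 'M[R]_(1 + n) := block_mx (1%:M : 'M_1) 0 u A.
pose Y : 'M[R]_(1 + n) := block_mx (0 : 'M_1) (- v) u A.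
exists (\det X0), (\det Y) => t.
have -> : \det (A + t *: (u *m v)) = \det (X t).
  have -> : X t = block_mx (1%:M : 'M_1) 0 u 1%:M *m
                  block_mx (1%:M : 'M_1) (- (t *: v)) 0 (A + t *: (u *m v)).
    rewrite mulmx_block !mul1mx !mulmx0 !mul0mx !addr0 mulmx1.
    by rewrite mulmxN -scalemxAr addrCA addNr addr0.
  by rewrite det_mulmx det_lblock det_ublock !det1 !mul1r.
rewrite -[\det X0]mul1r; apply: (@determinant_multilinear _ _ _ _ _ (lshift n 0)).
- rewrite /X /X0 /Y /block_mx !rowKu scale1r.
  by rewrite !row_id scale_row_mx add_row_mx scaler0 addr0 add0r scalerN.

- apply/matrixP => i j; rewrite !mxE.
  have -> : lift (lshift n (0 : 'I_1)) i = rshift 1 i.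
    by apply/val_inj; rewrite /= /bump /= add1n.
  by rewrite /X /X0 /block_mx (unsplitK (inr i : 'I_1 + 'I_n)).
- apply/matrixP => i j; rewrite !mxE.
  have -> : lift (lshift n (0 : 'I_1)) i = rshift 1 i.
    by apply/val_inj; rewrite /= /bump /= add1n.
  by rewrite /X /Y /block_mx (unsplitK (inr i : 'I_1 + 'I_n)).
Qed.

Lemma det_poly (R : realType) (n m : nat) (B : 'M[int]_(n, m)) (C : 'M[int]_(m, n))
  (J2 J4 : 'M[R]_n) (d : 'rV[R]_m) :
  exists p : {poly R}, forall k, \det (Mk B C J2 J4 d k) = p.[k].
Proof.
set A := map_mx (fun z : int => z%:~R) B *m diag_mx d *m map_mx (fun z : int => z%:~R) C.
exists (\det (- (map_mx polyC A + 'X^2 *: map_mx polyC J2 + 'X^4 *: map_mx polyC J4))) => k.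
rewrite -horner_evalE -det_map_mx; congr (\det _).
apply/matrixP => i j; rewrite /Mk -/A !mxE /= horner_evalE.
by rewrite !hornerE.
Qed.

Definition setc (R : realType) m (d : 'rV[R]_m) (j : 'I_m) (t : R) : 'rV[R]_m :=
  \row_i (if i == j then t else d 0 i).

Lemma Mk_setc (R : realType) (n m : nat) (B : 'M[int]_(n, m)) (C : 'M[int]_(m, n))
  (J2 J4 : 'M[R]_n) (d : 'rV[R]_m) j k t :
  Mk B C J2 J4 (setc d j t) k = Mk B C J2 J4 (setc d j 0) k +
    t *: ((- (map_mx (fun z : int => z%:~R) B *m delta_mx j (0 : 'I_1))) *m
          (delta_mx 0 j *m map_mx (fun z : int => z%:~R) C)).
Proof.
rewrite /Mk.
have -> : diag_mx (setc d j t) = diag_mx (setc d j 0) + t *: delta_mx j j.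
  apply/matrixP => a b; rewrite !mxE.
  case: (eqVneq a j) => [->|ne].
    rewrite /= mul0rn add0r. case: (eqVneq j b) => [_|ne2].
      by rewrite mulr1.
    by rewrite mulr0 mulr0n.
  by rewrite /= mulr0 addr0.
have -> : (- (map_mx (fun z : int => z%:~R) B *m delta_mx j (0 : 'I_1))) *m
          (delta_mx 0 j *m map_mx (fun z : int => z%:~R) C) =
   - (map_mx (fun z : int => z%:~R) B *m delta_mx j j *m map_mx (fun z : int => z%:~R) C :'M[R]_n).
  by rewrite mulNmx mulmxA -(mulmxA _ (delta_mx j 0)) mul_delta_mx.
rewrite mulmxDr mulmxDl -scalemxAr -scalemxAl scalerN.
rewrite !opprD (addrAC (- _) (- (t *: _))); exact: addrAC.
Qed.

Lemma affine_coord (R : realType) (n m : nat) (B : 'M[int]_(n, m)) (C : 'M[int]_(m, n))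
  (J2 J4 : 'M[R]_n) k (d : 'rV[R]_m) j :
  exists a b : R, forall t, \det (Mk B C J2 J4 (setc d j t) k) = a + t * b.
Proof.
have [a [b H]] := det_rank1 (Mk B C J2 J4 (setc d j 0) k)
  (- (map_mx (fun z : int => z%:~R) B *m delta_mx j (0 : 'I_1)))
  (delta_mx 0 j *m map_mx (fun z : int => z%:~R) C).
by exists a, b => t; rewrite Mk_setc H.
Qed.

Lemma setc_id (R : realType) m (d : 'rV[R]_m) j : setc d j (d 0 j) = d.
Proof. by apply/rowP => i; rewrite mxE; case: eqP => [->|]. Qed.

Lemma vertex_min (R : realType) m (dm dp : 'I_m -> R) (F : 'rV[R]_m -> R)
  (hF : forall d j, exists a b : R, forall t, F (setc d j t) = a + t * b)
  (hle : forall j, dm j <= dp j) d :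
  inD dm dp d -> exists b, F (vertex dm dp b) <= F d.
Proof.
move=> hd.
suff H : forall l, (l <= m)%N -> exists d', [/\ inD dm dp d',
   (forall j : 'I_m, (j < l)%N -> d' 0 j = dm j \/ d' 0 j = dp j) & F d' <= F d].
  have [d' [_ hv hF']] := H m (leqnn m).
  exists [ffun j => d' 0 j == dp j].
  suff -> : vertex dm dp [ffun j => d' 0 j == dp j] = d' by [].
  apply/rowP => j; rewrite /vertex mxE ffunE.
  case: eqP => [->//|ne]; by case: (hv j (ltn_ord j)).
elim=> [_|l IH hl]; first by exists d.
have [d' [hd' hv hF']] := IH (ltnW hl).
pose j := Ordinal hl.
have [a [b Hab]] := hF d' j.
pose t := if 0 <= b then dm j else dp j.
exists (setc d' j t); split.
- move=> i; rewrite mxE; case: eqP => [->|_]; last exact: hd'.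
  by rewrite /t; case: ifP => _; rewrite lexx ?hle.
- move=> i hi; rewrite mxE; case: eqP => [->|ne]; first by rewrite /t; case: ifP; [left|right].
  apply: hv; rewrite ltnS leq_eqVlt in hi; case/orP: hi => // /eqP hi.
  by case: ne; apply/val_inj.
- apply: le_trans hF'; rewrite -{2}(setc_id d' j) !Hab lerD2l /t.
  have := hd' j; case/andP => h1 h2.
  case: ifP => hb; first by nra.
  by move/negbT: hb; rewrite -ltNge => hb; nra.
Qed.

Lemma fin_min (R : realType) (I : finType) (i0 : I) (G : I -> R) :
  exists i, forall j, G i <= G j.
Proof.
case: (@arg_minP _ _ I i0 xpredT G erefl) => i _ H.
by exists i => j; apply: H.
Qed.

Lemma Psi_minusE (R : realType) (n m : nat)
  (B : 'M[int]_(n, m)) (C : 'M[int]_(m, n)) (J2 J4 : 'M[R]_n)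
  (dm dp : 'I_m -> R) (hdmp : forall j, dm j <= dp j) k :
  exists b0, (forall b, pvert B C J2 J4 dm dp b0 k <= pvert B C J2 J4 dm dp b k) /\
    Psi_minus B C J2 J4 dm dp k = pvert B C J2 J4 dm dp b0 k.
Proof.
have [b0 Hb0] := fin_min [ffun => false] (fun b => pvert B C J2 J4 dm dp b k).
exists b0; split => //.
have inV : inD dm dp (vertex dm dp b0).
  by move=> j; rewrite mxE; case: ifP => _; rewrite lexx hdmp.
have lb : lbound [set \det (Mk B C J2 J4 d k) | d in [set d | inD dm dp d]]
              (pvert B C J2 J4 dm dp b0 k).
  move=> _ [d hd <-].
  have [b Hb] := vertex_min (F := fun d => \det (Mk B C J2 J4 d k))
     (fun d j => affine_coord B C J2 J4 k d j) hdmp hd.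
  exact: le_trans (Hb0 b) Hb.
apply/le_anti/andP; split.
  apply: ge_inf; first by exists (pvert B C J2 J4 dm dp b0 k).
  by exists (vertex dm dp b0).
apply: lb_le_inf => //.
by exists (pvert B C J2 J4 dm dp b0 k); exists (vertex dm dp b0).
Qed.

Lemma Psi_plusE (R : realType) (n m : nat)
  (B : 'M[int]_(n, m)) (C : 'M[int]_(m, n)) (J2 J4 : 'M[R]_n)
  (dm dp : 'I_m -> R) (hdmp : forall j, dm j <= dp j) k :
  exists b0, (forall b, pvert B C J2 J4 dm dp b k <= pvert B C J2 J4 dm dp b0 k) /\
    Psi_plus B C J2 J4 dm dp k = pvert B C J2 J4 dm dp b0 k.
Proof.
have [b0 Hb0] := fin_min [ffun => false] (fun b => - pvert B C J2 J4 dm dp b k).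
have Hb0' : forall b, pvert B C J2 J4 dm dp b k <= pvert B C J2 J4 dm dp b0 k.
  by move=> b; rewrite -lerN2; apply: Hb0.
exists b0; split => //.
have inV : inD dm dp (vertex dm dp b0).
  by move=> j; rewrite mxE; case: ifP => _; rewrite lexx hdmp.
have ub : ubound [set \det (Mk B C J2 J4 d k) | d in [set d | inD dm dp d]]
              (pvert B C J2 J4 dm dp b0 k).
  move=> _ [d hd <-].
  have hF : forall d j, exists a b : R, forall t,
      - \det (Mk B C J2 J4 (setc d j t) k) = a + t * b.
    move=> d' j; have [a [b' H]] := affine_coord B C J2 J4 k d' j.
    by exists (- a), (- b') => t; rewrite H opprD mulrN.
  have [b Hb] := vertex_min (F := fun d => - \det (Mk B C J2 J4 d k)) hF hdmp hd.
  rewrite lerN2 in Hb.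
  exact: le_trans Hb (Hb0' b).
apply/le_anti/andP; split.
  apply: ge_sup => //.
  by exists (pvert B C J2 J4 dm dp b0 k); exists (vertex dm dp b0).
apply: ub_le_sup; first by exists (pvert B C J2 J4 dm dp b0 k).
by exists (vertex dm dp b0).
Qed.

Lemma roots_list (R : realType) (p : {poly R}) : p != 0 ->
  exists L : seq R, forall x, root p x -> x \in L.
Proof.
move: {2}(size p) (leqnn (size p)) => N; elim: N p => [|N IH] p hs hp.
  by move: hs; rewrite leqn0 size_poly_eq0 (negbTE hp).
case: (pselect (exists x, root p x)) => [[x rx]|nr]; last first.
  by exists [::] => x rx; case: nr; exists x.
have [q hq] := factor_theorem p x rx.
have q0 : q != 0 by apply: contraNneq hp => q0; rewrite hq q0 mul0r.
have hsq : (size q <= N)%N.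
  move: hs; rewrite hq size_mul // ?polyXsubC_eq0 // size_XsubC addn2 /=.
  by [].
have [L HL] := IH q hsq q0.
exists (x :: L) => y; rewrite hq rootM root_XsubC in_cons => /orP [/HL ->|->];
  by rewrite ?orbT.
Qed.

Lemma ivt_poly (R : realType) (g : {poly R}) a b : a <= b -> g.[a] * g.[b] < 0 ->
  exists c, a < c < b /\ root g c.
Proof.
move=> hab hneg.
have [c hc gc] : exists2 c, c \in `[a, b] & g.[c] = 0.
  apply: (@IVT _ (horner g) a b 0 hab).
  - by apply/continuous_subspaceT => ?; exact: continuous_horner.
  - case: (leP g.[a] g.[b]) => h /=.
    + by apply/andP; split; nra.
    + by apply/andP; split; nra.
have ga : g.[a] != 0 by apply: contraTneq hneg => ->; rewrite mul0r ltxx.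
have gb : g.[b] != 0 by apply: contraTneq hneg => ->; rewrite mulr0 ltxx.
exists c; split; last by apply/rootP.
move: hc; rewrite in_itv /= => /andP [h1 h2].
rewrite !lt_neqAle h1 h2 !andbT.
by apply/andP; split; apply/eqP => e; subst; rewrite gc eqxx in ga gb.
Qed.



Lemma piece_min (R : realType) (I : finType) (i0 : I) (P : I -> {poly R}) (L : seq R)
  (hL : forall i j x, P i != P j -> root (P i - P j) x -> x \in L)
  (Q : R -> Prop) (hQ : forall x z y, Q x -> Q y -> x < z < y -> z \notin L) :
  exists i, forall k, Q k -> forall j, (P i).[k] <= (P j).[k].
Proof.
case: (pselect (exists x y, [/\ Q x, Q y & x < y])) => [[x [y [qx qy xy]]]|none].
  pose t := (x + y) / 2.
  have xty : x < t < y by apply/andP; split; rewrite /t; lra.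
  have [i Hi] := fin_min i0 (fun i => (P i).[t]).
  exists i => k qk j.
  rewrite leNgt; apply/negP => hlt.
  have nePij : P i != P j by apply: contraTneq hlt => ->; rewrite ltxx.
  have tL : t \notin L := hQ x t y qx qy xty.
  have gt : (P i - P j).[t] < 0.
    rewrite lt_neqAle; apply/andP; split.
      apply/negP => /eqP gt0; move/negP: tL; apply.
      by apply: (hL i j t nePij); apply/rootP.
    by rewrite hornerD hornerN subr_le0; apply: Hi.
  have gk : 0 < (P i - P j).[k] by rewrite hornerD hornerN subr_gt0.
  case: (leP t k) => htk.
    have [c [/andP [hc1 hc2] rc]] := ivt_poly htk (ltac:(nra)).
    move/negP: (hQ x c k qx qk (ltac:(apply/andP; split; lra))); apply.
    exact: (hL i j c nePij rc).
  have [c [/andP [hc1 hc2] rc]] := ivt_poly (ltW htk) (ltac:(nra)).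
  move/negP: (hQ k c y qk qy (ltac:(apply/andP; split; lra))); apply.
  exact: (hL i j c nePij rc).
case: (pselect (exists q, Q q)) => [[q qq]|nq]; last first.
  by exists i0 => k qk; case: nq; exists k.
have [i Hi] := fin_min i0 (fun i => (P i).[q]).
exists i => k qk j.
case: (ltgtP k q) => [kq|qk'|->]; last exact: Hi.
- by case: none; exists k, q.
- by case: none; exists q, k.
Qed.

Lemma seq_choice (T : Type) (x0 : T) N (Pr : nat -> T -> Prop) :
  (forall h, (h < N)%N -> exists p, Pr h p) ->
  exists ps : seq T, size ps = N /\ forall h, (h < N)%N -> Pr h (nth x0 ps h).
Proof.
elim: N => [|N IH] H; first by exists [::].
have [ps [sz Hps]] := IH (fun h hh => H h (ltnW hh)).
have [p Hp] := H N (ltnSn N).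
exists (rcons ps p); split; first by rewrite size_rcons sz.
move=> h hh; rewrite nth_rcons sz.
case: ltnP => hN; first exact: Hps.
have -> : h = N by apply/eqP; rewrite eqn_leq hN -ltnS hh.
by rewrite eqxx.
Qed.

Lemma all_roots (R : realType) (I : finType) (P : I -> {poly R}) :
  exists L : seq R, forall i j x, P i != P j -> root (P i - P j) x -> x \in L.
Proof.
suff H : forall s : seq (I * I), exists L : seq R, forall ij x, ij \in s ->
    P ij.1 != P ij.2 -> root (P ij.1 - P ij.2) x -> x \in L.
  have [L HL] := H (enum [set: I * I]).
  by exists L => i j x; apply: (HL (i, j)); rewrite mem_enum inE.
elim=> [|ij s [L HL]]; first by exists [::].
case: (eqVneq (P ij.1) (P ij.2)) => [e|ne].
  exists L => ij' x; rewrite in_cons => /orP [/eqP ->|hs]; first by rewrite e eqxx.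
  exact: HL.
have [L' HL'] : exists L' : seq R, forall x, root (P ij.1 - P ij.2) x -> x \in L'.
  by apply: roots_list; rewrite subr_eq0.
exists (L' ++ L) => ij' x; rewrite in_cons mem_cat => /orP [/eqP ->|hs] hne hr.
  by rewrite HL'.
by rewrite (HL ij' x hs hne hr) orbT.
Qed.

Lemma piecewise_min (R : realType) (I : finType) (i0 : I) (P : I -> {poly R}) (f : R -> R)
  (hf : forall k, 0 <= k -> (forall i, f k <= (P i).[k]) /\ exists i, f k = (P i).[k]) :
  piecewise_poly_nonneg f.
Proof.
have [L hL] := all_roots P.
pose s := sort <=%R (undup L).
have ss : sorted <%R s by rewrite /s sort_lt_sorted undup_uniq.
have sle : sorted <=%R s by apply: sort_sorted; exact: le_total.
have memS : forall x, x \in L -> x \in s by move=> x; rewrite /s mem_sort mem_undup.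
have mono : forall a b, (a <= b)%N -> (b < size s)%N -> s`_a <= s`_b.
  move=> a b ab bs; apply: (sorted_leq_nth le_trans lexx 0 sle) => //.
  by rewrite inE; apply: leq_ltn_trans bs.
pose Q h k := [/\ 0 <= k, (0 < h)%N -> s`_(h.-1) <= k & (h < size s)%N -> k <= s`_h].
have hpiece : forall h, (h < (size s).+1)%N -> exists p : {poly R}, forall k, Q h k -> f k = p.[k].
  move=> h hh.
  have hQ : forall x z y, Q h x -> Q h y -> x < z < y -> z \notin L.
    move=> x z y [x0 hx1 hx2] [y0 hy1 hy2] /andP [xz zy].
    apply/negP => /memS zs.
    have ls : (index z s < size s)%N by rewrite index_mem.
    have zl : s`_(index z s) = z := nth_index 0 zs.
    case: (ltnP (index z s) h) => lh.
      have h0 : (0 < h)%N by apply: leq_ltn_trans (leq0n _) lh.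
      have := mono (index z s) h.-1 (ltac:(lia)) (ltac:(lia)).
      have := hx1 h0; rewrite zl; lra.
    have hs : (h < size s)%N by apply: leq_ltn_trans ls.
    have := mono h (index z s) lh ls.
    have := hy2 hs; rewrite zl; lra.
  have [i Hi] := piece_min i0 hL hQ.
  exists (P i) => k qk.
  have [k0 _ _] := qk; have [H1 [j Hj]] := hf k k0.
  apply/le_anti; rewrite H1 /= Hj; exact: Hi.
have [ps [hps Hps]] := seq_choice 0 hpiece.
exists s, ps; split => // k h k0 hh h1 h2.
by apply: (Hps h _ k); [rewrite ltnS | split].
Qed.

Lemma piecewise_max (R : realType) (I : finType) (i0 : I) (P : I -> {poly R}) (f : R -> R)
  (hf : forall k, 0 <= k -> (forall i, (P i).[k] <= f k) /\ exists i, f k = (P i).[k]) :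
  piecewise_poly_nonneg f.
Proof.
have [s [ps [ss sz H]]] : piecewise_poly_nonneg (fun k => - f k).
  apply: (@piecewise_min R I i0 (fun i => - P i)) => k k0.
  have [H1 [j Hj]] := hf k k0; split.
    by move=> i; rewrite hornerN lerN2.
  by exists j; rewrite hornerN Hj.
exists s, [seq - p | p <- ps]; split => //; first by rewrite size_map.
move=> k h k0 hh h1 h2.
rewrite (nth_map 0); last by rewrite sz ltnS.
by rewrite hornerN -(H k h k0 hh h1 h2) opprK.
Qed.

Theorem proposition1 (R : realType) (n m : nat) (hn : (0 < n)%N) (hm : (0 < m)%N)
  (B : 'M[int]_(n, m)) (C : 'M[int]_(m, n)) (J2 J4 : 'M[R]_n)
  (hJ2 : J2^T = J2) (hJ4 : J4^T = J4)
  (dm dp : 'I_m -> R) (hdm : forall j, 0 <= dm j) (hdmp : forall j, dm j <= dp j) :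
  (forall k : R, 0 <= k ->
     [/\ (forall b, Psi_minus B C J2 J4 dm dp k <= pvert B C J2 J4 dm dp b k),
         (exists b, Psi_minus B C J2 J4 dm dp k = pvert B C J2 J4 dm dp b k),
         (forall b, pvert B C J2 J4 dm dp b k <= Psi_plus B C J2 J4 dm dp k) &
         (exists b, Psi_plus B C J2 J4 dm dp k = pvert B C J2 J4 dm dp b k)])
  /\ piecewise_poly_nonneg (Psi_minus B C J2 J4 dm dp)
  /\ piecewise_poly_nonneg (Psi_plus B C J2 J4 dm dp).
Proof.
have HP : forall b : {ffun 'I_m -> bool}, exists p : {poly R},
    forall k, pvert B C J2 J4 dm dp b k = p.[k].
  by move=> b; exact: (det_poly B C J2 J4 (vertex dm dp b)).
have [P HPP] := choice HP.
split.
  move=> k k0.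
  have [b0 [H0 E0]] := Psi_minusE B C J2 J4 hdmp k.
  have [b1 [H1 E1]] := Psi_plusE B C J2 J4 hdmp k.
  split; [by move=> b; rewrite E0 | by exists b0 | by move=> b; rewrite E1 | by exists b1].
split.
  apply: (@piecewise_min R _ [ffun=> false] P) => k k0.
  have [b0 [H0 E0]] := Psi_minusE B C J2 J4 hdmp k.
  split; first by move=> i; rewrite E0 -!HPP.
  by exists b0; rewrite E0 HPP.
apply: (@piecewise_max R _ [ffun=> false] P) => k k0.
have [b0 [H0 E0]] := Psi_plusE B C J2 J4 hdmp k.
split; first by move=> i; rewrite E0 -!HPP.
by exists b0; rewrite E0 HPP.
Qed.
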